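(* For every $M>0$ there exist a Stackelberg game $(G,L,F)$ and an SCE-PA $\mathbf{x}=[x_\pi]\in\mathbf{X}^{SCE\text{-}PA}$ such that $\max_{y\in\mathcal{X}^{CE}}\sum_{p\in L}u_p(y)>0$ and both $\sum_{p\in L}u_p(x_\varnothing)-\max_{y\in\mathcal{X}^{CE}}\sum_{p\in L}u_p(y)\ge M$ and $\sum_{p\in L}u_p(x_\varnothing)\ge M\cdot\max_{y\in\mathcal{X}^{CE}}\sum_{p\in L}u_p(y)$.
   Context: A finite game is $G=(N,\{S_p\}_{p\in N},\{u_p\}_{p\in N})$ with players $N=\{1,\dots,n\}$, finite nonempty strategy sets $S_p$, and utilities $u_p:S\to\mathbb{R}$ on $S=\prod_{p\in N}S_p$; write $s=(s_p,s_{-p})$ with $s_{-p}\in S_{-p}=\prod_{q\neq p}S_q$. $\mathcal{X}=\Delta(S)$ is the set of probability distributions on $S$ and $u_p(x)=\sum_{s\in S}x(s)u_p(s)$ for $x\in\mathcal{X}$. For $P\subseteq N$, $\mathcal{X}^{CE}_P$ is the set of $x\in\mathcal{X}$ such that for every $p\in P$ and all $s_p\neq s_p'\in S_p$: $\sum_{s_{-p}\in S_{-p}} x(s_p,s_{-p})\,(u_p(s_p,s_{-p})-u_p(s_p',s_{-p}))\ge 0$; $\mathcal{X}^{CE}=\mathcal{X}^{CE}_N$ is the set of correlated equilibria of $G$. A Stackelberg game (SG) is a triple $(G,L,F)$ with $L\cup F=N$ and $L\cap F=\emptyset$ (leaders and followers). For $P\subseteq N$, $\Pi_P$ is the set of ordered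 subsets of $P$ (finite sequences of pairwise distinct elements of $P$, including the empty sequence $\varnothing$); for $\pi\in\Pi_P$ and $p\in P$ not occurring in $\pi$, $\pi p$ is $\pi$ with $p$ appended; when used as a set, $\pi$ means its set of entries. $\mathbf{X}=\prod_{\pi\in\Pi_L}\mathcal{X}^{CE}_{\pi\cup F}$, with elements $\mathbf{x}=[x_\pi]_{\pi\in\Pi_L}$. For $\mathbf{x}\in\mathbf{X}$ and $\pi\in\Pi_L$, $x_\pi$ is stable if $u_p(x_\pi)\ge u_p(x_{\pi p})$ for all $p\in L\setminus\pi$; $\mathbf{x}$ is stable if $x_\varnothing$ is stable, and perfectly stable if $x_\pi$ is stable for every $\pi\in\Pi_L$; $\mathbf{X}^{S}$ and $\mathbf{X}^{PS}$ denote the sets of stable and perfectly stable elements of $\mathbf{X}$. For $\mathbf{X}'\subseteq\mathbf{X}$ and $\pi\in\Pi_L$, $\mathcal{P}_{L\setminus\pi}(\mathbf{X}')$ is the set of Pareto optimal elements of $\{x'_\pi:\mathbf{x}'\in\mathbf{X}'\}$ with respect to the objectives $u_p$, $p\in L\setminus\pi$ (an element $y$ of the set is Pareto optimal if no $y'$ in the set satisfies $u_p(y')\ge u_p(y)$ for all $p\in L\setminus\pi$ with strict inequality for some such $p$). $\mathbf{x}\in\mathbf{X}$ is an SCE-PA if $\mathbf{x}\in\mathbf{X}^{PS}$ and $x_\varnothing\in\mathcal{P}_L(\mathbf{X}^{PS})$; $\mathbf{X}^{SCE\text{-}PA}$ is the set of SCE-PAs. *)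

(* Defs.v *)
From HB Require Import structures.
From mathcomp Require Import all_boot all_order all_algebra.
Set Implicit Arguments. Unset Strict Implicit. Unset Printing Implicit Defensive.
Import Order.TTheory GRing.Theory Num.Theory.
Local Open Scope ring_scope.

Definition profile (n : nat) (ns : 'I_n -> nat) := {dffun forall p : 'I_n, 'I_(ns p)}.

Record game (R : realFieldType) := Game {
  np : nat;
  ns : 'I_np -> nat;
  ns_pos : forall p, (0 < ns p)%N;
  util : 'I_np -> profile ns -> R }.

Arguments np {R} g.
Arguments ns {R} g p.
Arguments util {R} g p s.

Section Defs.
Variables (R : realFieldType) (G : game R).
Local Notation N := 'I_(np G).
Local Notation S := (profile (ns G)).

Definition upd (s : S) (p : N) (b : 'I_(ns G p)) : S :=
  @finfun _ (fun q => 'I_(ns G q))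
    (fun q => if p =P q is ReflectT e then ecast q 'I_(ns G q) e b else s q).

Arguments upd s p b : clear implicits.

Definition distr (x : {ffun S -> R}) : Prop :=
  (forall s, 0 <= x s) /\ \sum_s x s = 1.

Definition eu (p : N) (x : {ffun S -> R}) : R := \sum_s x s * util G p s.

Definition CEP (P : {set N}) (x : {ffun S -> R}) : Prop :=
  distr x /\
  forall p, p \in P -> forall a b : 'I_(ns G p), a != b ->
    0 <= \sum_(s : S | s p == a) x s * (util G p s - util G p (upd s p b)).

Definition CE (x : {ffun S -> R}) : Prop := CEP setT x.

(* Pi_P: ordered subsets of P (sequences of pairwise distinct elements of P) *)
Definition inPi (P : {set N}) (pi : seq N) : Prop := uniq pi /\ {subset pi <= P}.

(* elements of bold X = prod_{pi in Pi_L} X^CE_{pi u F};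
   represented as functions on sequences (values off Pi_L are irrelevant) *)
Definition inX (L F : {set N}) (xs : seq N -> {ffun S -> R}) : Prop :=
  forall pi, inPi L pi -> CEP ([set q in pi] :|: F) (xs pi).

Definition stable_at (L : {set N}) (xs : seq N -> {ffun S -> R}) (pi : seq N) : Prop :=
  forall p, p \in L -> p \notin pi -> eu p (xs (rcons pi p)) <= eu p (xs pi).

Definition stable L F xs : Prop := inX L F xs /\ stable_at L xs [::].

Definition perfectly_stable L F xs : Prop :=
  inX L F xs /\ forall pi, inPi L pi -> stable_at L xs pi.

Definition pareto_opt (L : {set N}) (X' : (seq N -> {ffun S -> R}) -> Prop)
    (pi : seq N) (y : {ffun S -> R}) : Prop :=
  (exists2 xs', X' xs' & xs' pi = y) /\
  ~ (exists2 xs', X' xs' &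
       (forall p, p \in L -> p \notin pi -> eu p y <= eu p (xs' pi)) /\
       (exists2 p, (p \in L) && (p \notin pi) & eu p y < eu p (xs' pi))).

Definition SCE_PA (L F : {set N}) (xs : seq N -> {ffun S -> R}) : Prop :=
  perfectly_stable L F xs /\ pareto_opt L (perfectly_stable L F) [::] (xs [::]).

Definition sumL (L : {set N}) (x : {ffun S -> R}) : R := \sum_(p in L) eu p x.

End Defs.

(* Main.v *)
Require Import Defs.
From HB Require Import structures.
From mathcomp Require Import all_boot all_order all_algebra.
From mathcomp Require Import lra.
Import Order.TTheory GRing.Theory Num.Theory.
Local Open Scope ring_scope.
Definition ns2 : 'I_2 -> nat := fun _ => 2%N.
Lemma ns2_pos p : (0 < ns2 p)%N. Proof. by []. Qed.
Definition P2 := profile ns2.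
Definition c0 (s : P2) : nat := s ord0.
Definition c1 (s : P2) : nat := s ord_max.
Definition uLn {R : realFieldType} (M : R) (i j : nat) : R :=
  if i == 0%N then (if j == 0%N then 1 else M + 2) else (if j == 0%N then 0 else M + 1).
Definition uFn {R : realFieldType} (i j : nat) : R :=
  if (i == 0%N) && (j == 0%N) then 1 else 0.
Definition util2 {R : realFieldType} (M : R) (p : 'I_2) (s : P2) : R :=
  if p == ord0 then uLn M (c0 s) (c1 s) else uFn (c0 s) (c1 s).
Definition G2 {R : realFieldType} (M : R) : game R := @Game R 2 ns2 ns2_pos (util2 M).
Lemma upd_val {R : realFieldType} (M : R) (s : P2) p b q :
  nat_of_ord (@upd R (G2 M) s p b q) = if p == q then nat_of_ord b else nat_of_ord (s q).
Proof.
by rewrite /upd ffunE; case: (p =P q) => [e|ne] //; subst q.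
Qed.
Section S.
Variables (R : realFieldType) (M : R).
Hypothesis hM : 0 < M.
Local Notation G := (G2 M).
Definition delta (s0 : P2) : {ffun P2 -> R} := [ffun s => if s == s0 then 1 else 0].

Lemma delta_distr s0 : @distr R G (delta s0).
Proof.
split=> [s|]; first by rewrite ffunE; case: ifP.
rewrite (bigD1 s0) //= big1 ?ffunE ?eqxx ?addr0 // => s /negbTE ns.
by rewrite ffunE ns.
Qed.

Lemma eu_delta p s0 : @eu R G p (delta s0) = util2 M p s0.
Proof.
rewrite /eu (bigD1 s0) //= big1 ?ffunE ?eqxx ?addr0 ?mul1r // => s /negbTE ns.
by rewrite ffunE ns mul0r.
Qed.

Lemma CEP_delta (P : {set 'I_2}) (s0 : P2) :
  (forall p, p \in P -> forall b : 'I_2, b != s0 p ->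
     util2 M p (@upd R G s0 p b) <= util2 M p s0) -> @CEP R G P (delta s0).
Proof.
move=> H; split; first exact: delta_distr.
move=> p pP a b ab; apply: sumr_ge0 => s /eqP sa.
rewrite ffunE; case: eqP => [e|_]; last by rewrite mul0r.
subst s; rewrite mul1r subr_ge0; apply: H => //.
by rewrite sa eq_sym.
Qed.

Lemma c0_upd s p b : c0 (@upd R G s p b) = if p == ord0 then nat_of_ord b else c0 s.
Proof. by rewrite /c0 upd_val. Qed.
Lemma c1_upd s p b : c1 (@upd R G s p b) = if p == ord_max then nat_of_ord b else c1 s.
Proof. by rewrite /c1 upd_val. Qed.
End S.

Lemma c0_cases s : c0 s = 0%N \/ c0 s = 1%N.
Proof. rewrite /c0; case: (s ord0) => [[|[|k]] H] /=; by [left|right|]. Qed.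
Lemma c1_cases s : c1 s = 0%N \/ c1 s = 1%N.
Proof. rewrite /c1; case: (s ord_max) => [[|[|k]] H] /=; by [left|right|]. Qed.
Lemma I2_cases (p : 'I_2) : p = ord0 \/ p = ord_max.
Proof. case: p => [[|[|k]] H]; [left|right|by []]; exact: val_inj. Qed.
Lemma I2v_cases (p : 'I_2) : nat_of_ord p = 0%N \/ nat_of_ord p = 1%N.
Proof. by case: p => [[|[|k]] H]; [left|right|]. Qed.

Definition s00 : P2 := [ffun q => (ord0 : 'I_2)].
Definition s11 : P2 := [ffun q => (ord_max : 'I_2)].
Lemma c0_s00 : c0 s00 = 0%N. Proof. by rewrite /c0 ffunE. Qed.
Lemma c1_s00 : c1 s00 = 0%N. Proof. by rewrite /c1 ffunE. Qed.
Lemma c0_s11 : c0 s11 = 1%N. Proof. by rewrite /c0 ffunE. Qed.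
Lemma c1_s11 : c1 s11 = 1%N. Proof. by rewrite /c1 ffunE. Qed.
Section S2.
Variables (R : realFieldType) (M : R).
Hypothesis hM : 0 < M.
Local Notation G := (G2 M).

Lemma CE00 P : @CEP R G P (delta R s00).
Proof.
apply: CEP_delta => p _ b; rewrite /s00 ffunE; case: b => [[|[|k]] Hb] // _.
case: (I2_cases p) => ->; rewrite /util2 c0_upd c1_upd c0_s00 c1_s00 /= /uLn /uFn /=; lra.
Qed.

Lemma CE11 (P : {set 'I_2}) : (forall p, p \in P -> p = ord_max) -> @CEP R G P (delta R s11).
Proof.
move=> HP; apply: CEP_delta => p /HP -> b; rewrite /s11 ffunE; case: b => [[|[|k]] Hb] // _.
rewrite /util2 c0_upd c1_upd c0_s11 c1_s11 /= /uLn /uFn /=; lra.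
Qed.

Definition a1 : 'I_2 := Ordinal (isT : (1 < 2)%N).

Lemma eqa1 (s : P2) : (s ord_max == a1) = (c1 s == 1%N).
Proof. by []. Qed.
Lemma eqa1' (s : P2) : (s ord0 == a1) = (c0 s == 1%N).
Proof. by []. Qed.

Lemma boundF (P : {set 'I_2}) y : ord_max \in P -> @CEP R G P y -> @eu R G ord0 y <= M + 1.
Proof.
move=> hP [[y0 y1] hC].
have CF := hC ord_max hP a1 ord0 isT.
rewrite big_mkcond /= in CF.
pose tF := fun s : P2 => if s ord_max == a1 then y s * (util2 M ord_max s - util2 M ord_max (@upd R G s ord_max ord0)) else 0.
have {}CF : 0 <= \sum_(s : P2) tF s by exact: CF.
have H : \sum_(s : P2) (y s * util2 M ord0 s + tF s) <= \sum_(s : P2) (y s * (M + 1)).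
  apply: ler_sum => s _; rewrite /tF eqa1 /util2 c0_upd c1_upd /=.
  have ys := y0 s; have yM := mulr_ge0 ys (ltW hM).
  case: (c0_cases s) => ->; case: (c1_cases s) => -> /=; rewrite /uLn /uFn /=; nra.
rewrite big_split /= -big_distrl /= y1 in H.
rewrite /eu /=; lra.
Qed.

Lemma boundCE y : @CE R G y -> @eu R G ord0 y <= 1.
Proof.
move=> [[y0 y1] hC].
have CF := hC ord_max (in_setT _) a1 ord0 isT.
have CL := hC ord0 (in_setT _) a1 ord0 isT.
rewrite big_mkcond /= in CF; rewrite big_mkcond /= in CL.
pose tF := fun s : P2 => if s ord_max == a1 then y s * (util2 M ord_max s - util2 M ord_max (@upd R G s ord_max ord0)) else 0.
have {}CF : 0 <= \sum_(s : P2) tF s by exact: CF.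
pose tL := fun s : P2 => if s ord0 == a1 then y s * (util2 M ord0 s - util2 M ord0 (@upd R G s ord0 ord0)) else 0.
have {}CL : 0 <= \sum_(s : P2) tL s by exact: CL.
have H : \sum_(s : P2) (y s * util2 M ord0 s + ((M + 1) * tF s + M * tL s)) <= \sum_(s : P2) y s.
  apply: ler_sum => s _; rewrite /tF /tL eqa1 eqa1' /util2 !c0_upd !c1_upd /=.
  have ys := y0 s; have yM := mulr_ge0 ys (ltW hM).
  case: (c0_cases s) => ->; case: (c1_cases s) => -> /=; rewrite /uLn /uFn /=; nra.
rewrite big_split /= big_split /= -!big_distrr /= y1 in H.
have h1 := mulr_ge0 (ltW hM) CL. have hM1 : 0 <= M + 1 by rewrite addr_ge0 // ltW. have h2 := mulr_ge0 hM1 CF.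
rewrite /eu /=; lra.
Qed.
End S2.

Lemma u0_00 {R : realFieldType} (M : R) : util2 M ord0 s00 = 1.
Proof. by rewrite /util2 c0_s00 c1_s00. Qed.
Lemma u0_11 {R : realFieldType} (M : R) : util2 M ord0 s11 = M + 1.
Proof. by rewrite /util2 c0_s11 c1_s11. Qed.

Theorem mainTheorem18 (R : realFieldType) (M : R) (hM : 0 < M) :
  exists (G : game R) (L F : {set 'I_(np G)})
         (xs : seq 'I_(np G) -> {ffun profile (ns G) -> R})
         (ystar : {ffun profile (ns G) -> R}),
    (L :|: F = setT /\ L :&: F = set0) /\
    SCE_PA L F xs /\
    (CE ystar /\ forall y, CE y -> sumL L y <= sumL L ystar) /\
    0 < sumL L ystar /\
    M <= sumL L (xs [::]) - sumL L ystar /\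
    M * sumL L ystar <= sumL L (xs [::]).
Proof.
pose xs := fun pi : seq 'I_2 => if pi is [::] then delta R s11 else delta R s00.
exists (G2 M), [set ord0], [set ord_max], xs, (delta R s00).
have sL : forall x, @sumL R (G2 M) [set ord0] x = @eu R (G2 M) ord0 x.
  by move=> x; rewrite /sumL big_set1.
rewrite !sL /= !eu_delta u0_00 u0_11.
have inXs : @inX R (G2 M) [set ord0] [set ord_max] xs.
  case=> [|x pi] _ /=.
    apply: CE11 => p; rewrite !inE /= => /eqP -> //.
  exact: CE00.
split.
  split; apply/setP => p; rewrite !inE; by case: (I2_cases p) => ->.
have PS : @perfectly_stable R (G2 M) [set ord0] [set ord_max] xs.
  split=> // pi _ p /set1P -> _.
  case: pi => [|x pi] /=; rewrite !eu_delta u0_00 ?u0_11 //; lra.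
split.
  split=> //.
  split; first by exists xs.
  move=> [xs' [hX _] [_ [p /andP [/set1P -> _]]]].
  rewrite eu_delta u0_11 => hlt.
  have hB := @boundF R M hM ([set q in [::]] :|: [set ord_max]) (xs' [::]).
  have hin : @inPi R (G2 M) [set ord0] [::] by split.
  have := hB (ltac:(by rewrite !inE)) (hX [::] hin).
  lra.
split.
  split; first exact: CE00.
  move=> y hy; rewrite sL; exact: boundCE.
split; first lra.
split; lra.
Qed.
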